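(* Let $A\in\mathcal{T}$ and let $\beta^A_{k,n}$ ($k\in\mathbb{Z}$, $n\in\mathbb{Z}_+$) be the coefficients of its series representation, i.e. the $k$-th Fourier coefficient $A_k$ of $\pi^{-1}(A)$ equals $T_{-k,0}\sum_n\beta^A_{k,n}T_{n,n}$ if $k\le0$ and $\big(\sum_n\beta^A_{k,n}T_{n,n}\big)T_{0,k}$ if $k>0$. Then $A$ is compact if and only if $\sum_{n=0}^\infty\beta^A_{k,n}=0$ for every $k\in\mathbb{Z}$.
   Context: Let $\ell^2(\mathbb{Z}_+)$ have orthonormal basis $(e_n)_{n\ge0}$, let $T$ be the unilateral shift $Te_n=e_{n+1}$, and let $\mathcal{T}$ be the norm-closed subalgebra of $B(\ell^2(\mathbb{Z}_+))$ generated by $T$ and $T^*$. For $n,m\in\mathbb{Z}_+$ put $T_{n,m}=T^n(T^* )^m$. $\widetilde{T}_{n,m}\in C(S^1,\mathcal{T})$ is $\widetilde{T}_{n,m}(e^{i\theta})=e^{i(m-n)\theta}T_{n,m}$, $\widetilde{\mathcal{T}}$ is the closed subalgebra of $C(S^1,\mathcal{T})$ (sup norm) generated by them, and $\pi:\widetilde{\mathcal{T}}\to\mathcal{T}$, $\pi(F)=F(1)$, is a *-isomorphism. The $k$-th Fourier coefficient of $F$ is $\frac{1}{2\pi}\int_0^{2\pi}F(e^{i\theta})e^{-ik\theta}d\theta$. Each such coefficient $A_k$ of $\pi^{-1}(A)$ has the displayed form with strongly convergent inner series and $\sum_n\beta^A_{k,n}$ convergent. *)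

(* Defs.v *)
From Stdlib Require Import Reals ZArith Lra.
Open Scope R_scope.

Record Cx := mkC { re : R ; im : R }.
Definition C0 : Cx := mkC 0 0.
Definition Cadd (a b : Cx) : Cx := mkC (re a + re b) (im a + im b).
Definition Csub (a b : Cx) : Cx := mkC (re a - re b) (im a - im b).
Definition Cmul (a b : Cx) : Cx :=
  mkC (re a * re b - im a * im b) (re a * im b + im a * re b).
Definition Cnorm2 (a : Cx) : R := re a * re a + im a * im a.
Definition Cexpi (t : R) : Cx := mkC (cos t) (sin t).

Definition Csum_to (b : nat -> Cx) (l : Cx) : Prop :=
  infinite_sum (fun n => re (b n)) (re l) /\ infinite_sum (fun n => im (b n)) (im l).

Definition vec := nat -> Cx.
Definition norm_sq_le (x : vec) (c : R) : Prop :=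
  forall N, sum_f_R0 (fun n => Cnorm2 (x n)) N <= c.
Definition l2 (x : vec) : Prop := exists c, norm_sq_le x c.
Definition vsub (x y : vec) : vec := fun i => Csub (x i) (y i).

(** * Operators (only their action on l^2 vectors matters) *)
Definition Op := vec -> vec.
Definition op_add (A B : Op) : Op := fun x i => Cadd (A x i) (B x i).
Definition op_scal (c : Cx) (A : Op) : Op := fun x i => Cmul c (A x i).
Definition op_mul (A B : Op) : Op := fun x => A (B x).
Definition op_close (A B : Op) (eps : R) : Prop :=
  forall x c, norm_sq_le x c -> norm_sq_le (vsub (A x) (B x)) (eps ^ 2 * c).
Definition op_eq (A B : Op) : Prop := forall x, l2 x -> forall i, A x i = B x i.

Definition shiftT : Op := fun x i => match i with O => C0 | S j => x j end.
Definition shiftTstar : Op := fun x i => x (S i).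
(** T_{n,m} = T^n (T^* )^m *)
Definition Tnm (n m : nat) : Op :=
  fun x i => if Nat.leb n i then x (i - n + m)%nat else C0.

Inductive in_alg : Op -> Prop :=
| alg_T : in_alg shiftT
| alg_Tstar : in_alg shiftTstar
| alg_add A B : in_alg A -> in_alg B -> in_alg (op_add A B)
| alg_scal c A : in_alg A -> in_alg (op_scal c A)
| alg_mul A B : in_alg A -> in_alg B -> in_alg (op_mul A B).

Definition in_Toeplitz (A : Op) : Prop :=
  forall eps, eps > 0 -> exists B, in_alg B /\ op_close A B eps.

(** * C(S^1, T): functions are parametrised by theta, value at e^{i theta} *)
Definition OpF := R -> Op.
Definition Ttil (n m : nat) : OpF :=
  fun t => op_scal (Cexpi ((INR m - INR n) * t)) (Tnm n m).

Inductive in_algt : OpF -> Prop :=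
| algt_gen n m : in_algt (Ttil n m)
| algt_add F G : in_algt F -> in_algt G -> in_algt (fun t => op_add (F t) (G t))
| algt_scal c F : in_algt F -> in_algt (fun t => op_scal c (F t))
| algt_mul F G : in_algt F -> in_algt G -> in_algt (fun t => op_mul (F t) (G t)).

Definition in_Ttilde (F : OpF) : Prop :=
  forall eps, eps > 0 -> exists G, in_algt G /\ forall t, op_close (F t) (G t) eps.

(** pi(F) = F(1) = F at theta = 0 *)
Definition pi_op (F : OpF) : Op := F 0.

(** Ak is the k-th Fourier coefficient (1/2pi) int_0^{2pi} F(e^{it}) e^{-ikt} dt;
    the (norm-continuous) operator valued integral is evaluated coordinatewise:
    (Ak x)_i = (1/2pi) int_0^{2pi} e^{-ikt} (F(t) x)_i dt. *)
Definition is_fourier_coeff (F : OpF) (k : Z) (Ak : Op) : Prop :=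
  forall x, l2 x -> forall i,
    (exists pr : Riemann_integrable
                   (fun t => re (Cmul (Cexpi (- IZR k * t)) (F t x i))) 0 (2 * PI),
        RiemannInt pr = 2 * PI * re (Ak x i)) /\
    (exists pr : Riemann_integrable
                   (fun t => im (Cmul (Cexpi (- IZR k * t)) (F t x i))) 0 (2 * PI),
        RiemannInt pr = 2 * PI * im (Ak x i)).

Fixpoint diag_partial (b : nat -> Cx) (N : nat) : Op :=
  match N with
  | O => op_scal (b O) (Tnm 0 0)
  | S N' => op_add (diag_partial b N') (op_scal (b N) (Tnm N N))
  end.

Definition diag_series_strong (b : nat -> Cx) (S : Op) : Prop :=
  forall x, l2 x -> forall eps, eps > 0 -> exists N0, forall N, (N >= N0)%nat ->
    norm_sq_le (vsub (diag_partial b N x) (S x)) eps.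

Definition series_rep (F : OpF) (beta : Z -> nat -> Cx) : Prop :=
  forall k : Z, exists Ak S,
    is_fourier_coeff F k Ak /\ diag_series_strong (beta k) S /\
    ((k <= 0)%Z -> op_eq Ak (op_mul (Tnm (Z.to_nat (- k)) 0) S)) /\
    ((0 < k)%Z -> op_eq Ak (op_mul S (Tnm 0 (Z.to_nat k)))).

Definition compact_op (A : Op) : Prop :=
  forall xs : nat -> vec, (forall j, norm_sq_le (xs j) 1) ->
    exists phi : nat -> nat, (forall j, (phi j < phi (S j))%nat) /\
      exists y, l2 y /\ forall eps, eps > 0 -> exists J, forall j, (j >= J)%nat ->
        norm_sq_le (vsub (A (xs (phi j))) y) eps.

(* Main.v *)
Require Import Defs.
From Stdlib Require Import Reals ZArith.
From Stdlib Require Import Lra Lia Psatz List.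
From Stdlib Require Import ClassicalEpsilon FunctionalExtensionality Classical.
Open Scope R_scope.

Lemma Cx_eq (a b : Cx) : re a = re b -> im a = im b -> a = b.
Proof. destruct a, b; simpl; intros; subst; reflexivity. Qed.

Ltac ceq := apply Cx_eq; simpl; try ring.

Definition Cone : Cx := mkC 1 0.
Definition ev (j : nat) : vec := fun i => if Nat.eqb i j then Cone else C0.

Lemma Cnorm2_nonneg a : 0 <= Cnorm2 a.
Proof. unfold Cnorm2; pose proof (Rle_0_sqr (re a)); pose proof (Rle_0_sqr (im a)); unfold Rsqr in *; lra. Qed.

Ltac sq x := let h := fresh in pose proof (Rle_0_sqr x) as h; unfold Rsqr in h.

Lemma Cnorm2_add a b : Cnorm2 (Cadd a b) <= 2 * Cnorm2 a + 2 * Cnorm2 b.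
Proof. unfold Cnorm2; destruct a as [a1 a2], b as [b1 b2]; simpl; sq (a1-b1); sq (a2-b2); lra. Qed.

Lemma Cnorm2_add3 a b c : Cnorm2 (Cadd a (Cadd b c)) <= 3 * Cnorm2 a + 3 * Cnorm2 b + 3 * Cnorm2 c.
Proof. unfold Cnorm2; destruct a as [a1 a2], b as [b1 b2], c as [c1 c2]; simpl;
  sq (a1-b1); sq (a2-b2); sq (a1-c1); sq (a2-c2); sq (b1-c1); sq (b2-c2); lra. Qed.

Lemma Cnorm2_mul a b : Cnorm2 (Cmul a b) = Cnorm2 a * Cnorm2 b.
Proof. unfold Cnorm2; destruct a, b; simpl; ring. Qed.

Lemma Cnorm2_re a : re a * re a <= Cnorm2 a.
Proof. unfold Cnorm2; pose proof (Rle_0_sqr (im a)); unfold Rsqr in *; lra. Qed.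
Lemma Cnorm2_im a : im a * im a <= Cnorm2 a.
Proof. unfold Cnorm2; pose proof (Rle_0_sqr (re a)); unfold Rsqr in *; lra. Qed.

Lemma Cnorm2_sub_tri a b c :
  Cnorm2 (Csub a c) <= 2 * Cnorm2 (Csub a b) + 2 * Cnorm2 (Csub b c).
Proof.
  replace (Csub a c) with (Cadd (Csub a b) (Csub b c)) by ceq.
  apply Cnorm2_add.
Qed.

Lemma Cnorm2_zero a : Cnorm2 a = 0 -> a = C0.
Proof. unfold Cnorm2; intros H; destruct a as [r0 i0]; simpl in *;
  destruct (Rplus_sqr_eq_0 r0 i0 H); ceq; auto. Qed.

Lemma Cnorm2_C0 : Cnorm2 C0 = 0.
Proof. unfold Cnorm2; simpl; ring. Qed.

Lemma small_zero (d K : R) : 0 <= d -> (forall eps, eps > 0 -> d <= eps ^ 2 * K) -> d = 0.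
Proof.
  intros Hd H.
  assert (HK : 0 <= K) by (specialize (H 1 ltac:(lra)); nra).
  destruct (Rle_lt_dec d 0) as [h|h]; [lra|].
  set (e := Rmin 1 (d / (2 * (K + 1)))).
  assert (He : 0 < e) by (unfold e; apply Rmin_pos; [lra| apply Rdiv_lt_0_compat; lra]).
  assert (He1 : e <= 1) by apply Rmin_l.
  assert (He2 : e <= d / (2 * (K+1))) by apply Rmin_r.
  specialize (H e He).
  assert (e ^ 2 * K <= e * K) by (simpl; nra).
  assert (e * (2 * (K+1)) <= d).
  { apply Rmult_le_compat_r with (r := 2*(K+1)) in He2; [|lra].
    unfold Rdiv in He2. rewrite Rmult_assoc, Rinv_l in He2; lra. }
  nra.
Qed.

Lemma small_eq (u v : Cx) K : (forall eps, eps > 0 -> Cnorm2 (Csub u v) <= eps ^ 2 * K) -> u = v.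
Proof.
  intros H. apply small_zero in H; [|apply Cnorm2_nonneg].
  apply Cnorm2_zero in H. destruct u, v; unfold Csub in H; simpl in H; injection H; intros; ceq; lra.
Qed.

Lemma sum_nonneg f N : (forall n, 0 <= f n) -> 0 <= sum_f_R0 f N.
Proof. intros; induction N; simpl; auto; specialize (H (S N)); lra. Qed.

Lemma sum_term_le f N i : (forall n, 0 <= f n) -> (i <= N)%nat -> f i <= sum_f_R0 f N.
Proof.
  intros Hf Hi; induction N.
  - replace i with 0%nat by lia; simpl; lra.
  - destruct (Nat.eq_dec i (S N)) as [->|ne]; simpl.
    + pose proof (sum_nonneg f N Hf); lra.
    + specialize (IHN ltac:(lia)); specialize (Hf (S N)); lra.
Qed.

Lemma sum_lin a b f g N :
  sum_f_R0 (fun n => a * f n + b * g n) N = a * sum_f_R0 f N + b * sum_f_R0 g N.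
Proof. induction N; simpl; [ring| rewrite IHN; ring]. Qed.

Lemma sum_lin3 a f g h N :
  sum_f_R0 (fun n => a * f n + a * g n + a * h n) N = a * sum_f_R0 f N + a * sum_f_R0 g N + a * sum_f_R0 h N.
Proof. induction N; simpl; [ring| rewrite IHN; ring]. Qed.

Lemma sum_mono f N M : (forall n, 0 <= f n) -> (N <= M)%nat -> sum_f_R0 f N <= sum_f_R0 f M.
Proof.
  intros Hf H; induction H; [lra|]. simpl. specialize (Hf (S m)); lra.
Qed.

Lemma coord_le x c i : norm_sq_le x c -> Cnorm2 (x i) <= c.
Proof.
  intros H; specialize (H i).
  pose proof (sum_term_le (fun n => Cnorm2 (x n)) i i (fun n => Cnorm2_nonneg _) (le_n _)).
  simpl in H0; lra.
Qed.

Lemma norm_sq_le_nonneg x c : norm_sq_le x c -> 0 <= c.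
Proof. intros H; pose proof (coord_le x c 0 H); pose proof (Cnorm2_nonneg (x 0%nat)); lra. Qed.

Lemma norm_sq_le_comb (w u v : vec) a b :
  norm_sq_le u a -> norm_sq_le v b ->
  (forall i, Cnorm2 (w i) <= 2 * Cnorm2 (u i) + 2 * Cnorm2 (v i)) -> norm_sq_le w (2 * a + 2 * b).
Proof.
  intros Hu Hv H N. eapply Rle_trans.
  apply sum_Rle with (Bn := fun n => 2 * Cnorm2 (u n) + 2 * Cnorm2 (v n)); intros; apply H.
  rewrite sum_lin. specialize (Hu N); specialize (Hv N); lra.
Qed.

Lemma norm_sq_le_comb3 (w u v z : vec) a b c :
  norm_sq_le u a -> norm_sq_le v b -> norm_sq_le z c ->
  (forall i, Cnorm2 (w i) <= 3 * Cnorm2 (u i) + 3 * Cnorm2 (v i) + 3 * Cnorm2 (z i)) ->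
  norm_sq_le w (3 * a + 3 * b + 3 * c).
Proof.
  intros Hu Hv Hz H N. eapply Rle_trans.
  apply sum_Rle with (Bn := fun n => 3 * Cnorm2 (u n) + 3 * Cnorm2 (v n) + 3 * Cnorm2 (z n)); intros; apply H.
  rewrite sum_lin3. specialize (Hu N); specialize (Hv N); specialize (Hz N); lra.
Qed.

Lemma norm_sq_le_mono x c d : norm_sq_le x c -> c <= d -> norm_sq_le x d.
Proof. intros H h N; specialize (H N); lra. Qed.

Lemma norm_sq_le_ext x y c : (forall i, Cnorm2 (x i) = Cnorm2 (y i)) -> norm_sq_le y c -> norm_sq_le x c.
Proof.
  intros E H N. specialize (H N). erewrite sum_eq; [exact H|]. intros; simpl; apply E.
Qed.

Lemma ev_norm j : norm_sq_le (ev j) 1.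
Proof.
  intros N. unfold ev.
  destruct (le_lt_dec j N).
  - clear -l. induction l.
    + destruct j.
      * simpl. unfold Cone, Cnorm2; simpl; lra.
      * simpl. rewrite Nat.eqb_refl.
        assert (sum_f_R0 (fun n => Cnorm2 (if Nat.eqb n (S j) then Cone else C0)) j = 0).
        { rewrite sum_eq_R0; auto. intros n Hn. destruct (Nat.eqb_spec n (S j)); [lia|]. apply Cnorm2_C0. }
        rewrite H; unfold Cone, Cnorm2; simpl; lra.
    + rewrite tech5; cbv beta. destruct (Nat.eqb_spec (S m) j); [lia|]. rewrite Cnorm2_C0; lra.
  - rewrite sum_eq_R0; [lra|]. intros n Hn. destruct (Nat.eqb_spec n j); [lia|]. apply Cnorm2_C0.
Qed.

Lemma ev_l2 j : l2 (ev j).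
Proof. exists 1; apply ev_norm. Qed.

Definition term := (Cx * nat * nat)%type.

Fixpoint LC (l : list term) (x : vec) (i : nat) : Cx :=
  match l with
  | nil => C0
  | (c, n, m) :: l' => Cadd (Cmul c (Tnm n m x i)) (LC l' x i)
  end.

Lemma LC_app l1 l2 x i : LC (l1 ++ l2) x i = Cadd (LC l1 x i) (LC l2 x i).
Proof.
  induction l1 as [|[[c n] m] l1 IH]; simpl.
  - ceq.
  - rewrite IH. ceq.
Qed.

Definition lscal (c : Cx) (l : list term) : list term :=
  map (fun t => match t with (d, n, m) => (Cmul c d, n, m) end) l.

Lemma LC_scal c l x i : LC (lscal c l) x i = Cmul c (LC l x i).
Proof.
  induction l as [|[[d n] m] l IH]; simpl.
  - ceq.
  - rewrite IH. ceq.
Qed.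

Definition Tc (n m p q : nat) : nat * nat :=
  if Nat.leb m p then ((n + p - m)%nat, q) else (n, (m - p + q)%nat).

Lemma Tnm_comp n m p q x i :
  Tnm n m (Tnm p q x) i = Tnm (fst (Tc n m p q)) (snd (Tc n m p q)) x i.
Proof.
  unfold Tnm, Tc.
  destruct (Nat.leb_spec m p); simpl;
  repeat match goal with |- context [Nat.leb ?a ?b] => destruct (Nat.leb_spec a b) end;
  try lia; try reflexivity; f_equal; lia.
Qed.

Definition lcomp1 (c : Cx) (n m : nat) (l : list term) : list term :=
  map (fun t => match t with (d, p, q) => (Cmul c d, fst (Tc n m p q), snd (Tc n m p q)) end) l.

Fixpoint lcomp (l1 l2 : list term) : list term :=
  match l1 with
  | nil => nil
  | (c, n, m) :: l1' => lcomp1 c n m l2 ++ lcomp l1' l2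
  end.

Lemma Tnm_LC n m l x i : Tnm n m (LC l x) i = LC (map (fun t => match t with (d, p, q) => (d, fst (Tc n m p q), snd (Tc n m p q)) end) l) x i.
Proof.
  induction l as [|[[d p] q] l IH]; simpl.
  - unfold Tnm. destruct (Nat.leb n i); reflexivity.
  - rewrite <- IH, <- Tnm_comp. unfold Tnm. destruct (Nat.leb n i); [reflexivity|ceq].
Qed.

Lemma LC_comp l1 l2 x i : LC l1 (LC l2 x) i = LC (lcomp l1 l2) x i.
Proof.
  induction l1 as [|[[c n] m] l1 IH]; simpl; [reflexivity|].
  rewrite LC_app, IH, Tnm_LC. f_equal.
  clear. induction l2 as [|[[d p] q] l2 IH]; simpl; [ceq|].
  rewrite <- IH. ceq.
Qed.

Lemma alg_LC B : in_alg B -> exists l, forall x i, B x i = LC l x i.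
Proof.
  induction 1.
  - exists ((Cone, 1%nat, 0%nat) :: nil). intros x i. simpl. unfold shiftT, Tnm.
    destruct i; simpl; ceq; replace (i - 0 + 0)%nat with i by lia; ring.
  - exists ((Cone, 0%nat, 1%nat) :: nil). intros x i. simpl. unfold shiftTstar, Tnm.
    simpl. replace (i - 0 + 1)%nat with (S i) by lia. ceq.
  - destruct IHin_alg1 as [l1 H1], IHin_alg2 as [l2 H2]. exists (l1 ++ l2).
    intros; unfold op_add; rewrite LC_app, H1, H2; reflexivity.
  - destruct IHin_alg as [l H1]. exists (lscal c l). intros; unfold op_scal; rewrite LC_scal, H1; reflexivity.
  - destruct IHin_alg1 as [l1 H1], IHin_alg2 as [l2 H2]. exists (lcomp l1 l2).
    intros; unfold op_mul. rewrite H1, <- LC_comp. f_equal.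
    apply functional_extensionality; intros; auto.
Qed.

Lemma LC_scalv l c x i : LC l (fun j => Cmul c (x j)) i = Cmul c (LC l x i).
Proof.
  induction l as [|[[d n] m] l IH]; simpl; [ceq|].
  rewrite IH. unfold Tnm. destruct (Nat.leb n i); ceq.
Qed.

Lemma LC_addv l x y i : LC l (fun j => Cadd (x j) (y j)) i = Cadd (LC l x i) (LC l y i).
Proof.
  induction l as [|[[d n] m] l IH]; simpl; [ceq|].
  rewrite IH. unfold Tnm. destruct (Nat.leb n i); ceq.
Qed.

Fixpoint Mx (l : list term) : nat :=
  match l with nil => 0%nat | (_, n, m) :: l' => (n + m + Mx l')%nat end.

Lemma LC_ev_zero l i j : (i + Mx l < j)%nat -> LC l (ev j) i = C0.
Proof.
  induction l as [|[[d n] m] l IH]; simpl; intros H; [reflexivity|].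
  rewrite IH by lia. unfold Tnm, ev.
  destruct (Nat.leb n i); [|ceq].
  destruct (Nat.eqb_spec (i - n + m) j); [lia|]. ceq.
Qed.

Definition Lt (l : list term) : list term :=
  map (fun t => match t with (c, n, m) => (c, (n - m)%nat, (m - n)%nat) end) l.

Lemma LC_shift l N x i : (Mx l <= N)%nat -> LC l (Tnm N 0 x) (i + N) = LC (Lt l) x i.
Proof.
  induction l as [|[[d n] m] l IH]; simpl; intros H; [reflexivity|].
  rewrite IH by lia. f_equal. f_equal. unfold Tnm.
  repeat match goal with |- context [Nat.leb ?a ?b] => destruct (Nat.leb_spec a b) end;
  try lia; try reflexivity; f_equal; lia.
Qed.

Lemma LC_Lt_local l x y i : (forall j, (j <= i + Mx l)%nat -> x j = y j) -> LC (Lt l) x i = LC (Lt l) y i.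
Proof.
  induction l as [|[[d n] m] l IH]; simpl; intros H; [reflexivity|].
  rewrite IH by (intros; apply H; lia). f_equal. f_equal. unfold Tnm.
  destruct (Nat.leb_spec (n - m) i); [|reflexivity]. apply H. lia.
Qed.

Lemma LC_diff_zero l x i : (Mx l <= i)%nat -> LC l x i = LC (Lt l) x i.
Proof.
  induction l as [|[[d n] m] l IH]; simpl; intros H; [reflexivity|].
  rewrite IH by lia. f_equal. f_equal. unfold Tnm.
  repeat match goal with |- context [Nat.leb ?a ?b] => destruct (Nat.leb_spec a b) end;
  try lia; try reflexivity; f_equal; lia.
Qed.

Definition conv0 (u : nat -> Cx) : Prop :=
  forall eps, eps > 0 -> exists N, forall n, (N <= n)%nat -> Cnorm2 (u n) < eps.

Lemma conv0_ext u v : (forall n, Cnorm2 (u n) = Cnorm2 (v n)) -> conv0 v -> conv0 u.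
Proof. intros E H eps He. destruct (H eps He) as [N HN]. exists N; intros; rewrite E; auto. Qed.

Lemma conv0_C0 : conv0 (fun _ => C0).
Proof. intros eps He; exists 0%nat; intros; rewrite Cnorm2_C0; lra. Qed.

Lemma conv0_add u v : conv0 u -> conv0 v -> conv0 (fun n => Cadd (u n) (v n)).
Proof.
  intros Hu Hv eps He.
  destruct (Hu (eps/4) ltac:(lra)) as [N1 H1]. destruct (Hv (eps/4) ltac:(lra)) as [N2 H2].
  exists (N1 + N2)%nat; intros n Hn. pose proof (Cnorm2_add (u n) (v n)).
  specialize (H1 n ltac:(lia)); specialize (H2 n ltac:(lia)); lra.
Qed.

Lemma conv0_mul c u : conv0 u -> conv0 (fun n => Cmul c (u n)).
Proof.
  intros Hu eps He. pose proof (Cnorm2_nonneg c).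
  destruct (Hu (eps / (Cnorm2 c + 1))) as [N HN].
  { apply Rdiv_lt_0_compat; lra. }
  exists N; intros n Hn. rewrite Cnorm2_mul. specialize (HN n Hn).
  pose proof (Cnorm2_nonneg (u n)).
  assert (Cnorm2 c * Cnorm2 (u n) <= (Cnorm2 c + 1) * Cnorm2 (u n)) by nra.
  assert ((Cnorm2 c + 1) * Cnorm2 (u n) < (Cnorm2 c + 1) * (eps / (Cnorm2 c + 1))).
  { apply Rmult_lt_compat_l; lra. }
  replace ((Cnorm2 c + 1) * (eps / (Cnorm2 c + 1))) with eps in H2 by (field; lra). lra.
Qed.

Lemma conv0_shift u r : conv0 u -> conv0 (fun n => u (n + r)%nat).
Proof. intros H eps He; destruct (H eps He) as [N HN]; exists N; intros; apply HN; lia. Qed.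

Lemma LC_cont l (xs : nat -> vec) x i :
  (forall j, conv0 (fun a => Csub (xs a j) (x j))) ->
  conv0 (fun a => Csub (LC l (xs a) i) (LC l x i)).
Proof.
  intros H. induction l as [|[[d n] m] l IH]; simpl.
  - apply conv0_ext with (v := fun _ => C0); [intros; f_equal; ceq|apply conv0_C0].
  - eapply conv0_ext with (v := fun a => Cadd (Cmul d (Csub (Tnm n m (xs a) i) (Tnm n m x i))) (Csub (LC l (xs a) i) (LC l x i))).
    { intros; f_equal; ceq. }
    apply conv0_add; [|exact IH]. apply conv0_mul. unfold Tnm.
    destruct (Nat.leb n i); [apply H|].
    apply conv0_ext with (v := fun _ => C0); [intros; f_equal; ceq|apply conv0_C0].
Qed.

Lemma toep_LC A : in_Toeplitz A -> forall eps, eps > 0 -> exists l,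
  forall x c, norm_sq_le x c -> norm_sq_le (vsub (A x) (LC l x)) (eps ^ 2 * c).
Proof.
  intros HA eps He. destruct (HA eps He) as [B [HB Hc]].
  destruct (alg_LC B HB) as [l Hl]. exists l. intros x c Hx.
  eapply norm_sq_le_ext; [|apply Hc, Hx]. intros i. unfold vsub. rewrite Hl. reflexivity.
Qed.

Definition vscal (c : Cx) (x : vec) : vec := fun j => Cmul c (x j).
Definition vadd (x y : vec) : vec := fun j => Cadd (x j) (y j).

Lemma norm_sq_le_scal c x c0 : norm_sq_le x c0 -> norm_sq_le (vscal c x) (Cnorm2 c * c0).
Proof.
  intros H N. unfold vscal. erewrite sum_eq.
  2:{ intros; rewrite Cnorm2_mul; reflexivity. }
  assert (E : forall (a : R) f N, sum_f_R0 (fun n => a * f n) N = a * sum_f_R0 f N)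
    by (intros a f M; induction M; simpl; [ring| rewrite IHM; ring]).
  rewrite E. apply Rmult_le_compat_l; [apply Cnorm2_nonneg|apply H].
Qed.

Lemma norm_sq_le_add x y a b : norm_sq_le x a -> norm_sq_le y b -> norm_sq_le (vadd x y) (2*a + 2*b).
Proof. intros; eapply norm_sq_le_comb; eauto. intros; apply Cnorm2_add. Qed.

Lemma A_scal A : in_Toeplitz A -> forall x, l2 x -> forall c i, A (vscal c x) i = Cmul c (A x i).
Proof.
  intros HA x [c0 Hx] c i.
  apply small_eq with (K := 4 * Cnorm2 c * c0). intros eps He.
  destruct (toep_LC A HA eps He) as [l Hl].
  pose proof (coord_le _ _ i (Hl _ _ (norm_sq_le_scal c x c0 Hx))) as H1.
  pose proof (coord_le _ _ i (Hl _ _ Hx)) as H2.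
  unfold vsub in *. unfold vscal in H1 at 2. rewrite LC_scalv in H1.
  replace (Csub (A (vscal c x) i) (Cmul c (A x i))) with
    (Cadd (Csub (A (vscal c x) i) (Cmul c (LC l x i))) (Cmul c (Csub (LC l x i) (A x i)))) by ceq.
  eapply Rle_trans; [apply Cnorm2_add|]. rewrite Cnorm2_mul.
  replace (Cnorm2 (Csub (LC l x i) (A x i))) with (Cnorm2 (Csub (A x i) (LC l x i))) by (unfold Cnorm2; simpl; ring).
  pose proof (Cnorm2_nonneg c).
  assert (Cnorm2 c * Cnorm2 (Csub (A x i) (LC l x i)) <= Cnorm2 c * (eps^2 * c0)) by (apply Rmult_le_compat_l; auto).
  lra.
Qed.

Lemma A_add A : in_Toeplitz A -> forall x y, l2 x -> l2 y -> forall i, A (vadd x y) i = Cadd (A x i) (A y i).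
Proof.
  intros HA x y [a Hx] [b Hy] i.
  apply small_eq with (K := 3 * (2*a+2*b) + 3 * a + 3 * b). intros eps He.
  destruct (toep_LC A HA eps He) as [l Hl].
  pose proof (coord_le _ _ i (Hl _ _ (norm_sq_le_add x y a b Hx Hy))) as H1.
  pose proof (coord_le _ _ i (Hl _ _ Hx)) as H2.
  pose proof (coord_le _ _ i (Hl _ _ Hy)) as H3.
  unfold vsub in *. unfold vadd in H1 at 2. rewrite LC_addv in H1.
  replace (Csub (A (vadd x y) i) (Cadd (A x i) (A y i))) with
    (Cadd (Csub (A (vadd x y) i) (Cadd (LC l x i) (LC l y i))) (Cadd (Csub (LC l x i) (A x i)) (Csub (LC l y i) (A y i)))) by ceq.
  eapply Rle_trans; [apply Cnorm2_add3|].
  replace (Cnorm2 (Csub (LC l x i) (A x i))) with (Cnorm2 (Csub (A x i) (LC l x i))) by (unfold Cnorm2; simpl; ring).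
  replace (Cnorm2 (Csub (LC l y i) (A y i))) with (Cnorm2 (Csub (A y i) (LC l y i))) by (unfold Cnorm2; simpl; ring).
  lra.
Qed.

Fixpoint Csum (f : nat -> Cx) (J : nat) : Cx :=
  match J with O => f O | S J' => Cadd (Csum f J') (f J) end.

Lemma l2_scal c x : l2 x -> l2 (vscal c x).
Proof. intros [a H]; eexists; apply norm_sq_le_scal; eauto. Qed.
Lemma l2_add x y : l2 x -> l2 y -> l2 (vadd x y).
Proof. intros [a H] [b H']; eexists; apply norm_sq_le_add; eauto. Qed.

Lemma A_fin A : in_Toeplitz A -> forall (cs : nat -> Cx) (g : nat -> nat) J i,
  A (fun k => Csum (fun j => Cmul (cs j) (ev (g j) k)) J) i = Csum (fun j => Cmul (cs j) (A (ev (g j)) i)) J.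
Proof.
  intros HA cs g J i.
  assert (L2 : forall J, l2 (fun k => Csum (fun j => Cmul (cs j) (ev (g j) k)) J)).
  { induction J0; simpl.
    - apply (l2_scal (cs 0%nat) (ev (g 0%nat))), ev_l2.
    - apply (l2_add _ (vscal (cs (S J0)) (ev (g (S J0))))); auto. apply l2_scal, ev_l2. }
  induction J; simpl.
  - apply (A_scal A HA (ev (g 0%nat)) (ev_l2 _)).
  - rewrite <- IHJ, <- (A_scal A HA (ev (g (S J))) (ev_l2 _)).
    apply (A_add A HA _ (vscal (cs (S J)) (ev (g (S J))))); auto. apply l2_scal, ev_l2.
Qed.

Definition trunc (J : nat) (x : vec) : vec := fun j => if Nat.leb j J then x j else C0.

Lemma shift_trunc_sum N J y :
  Tnm N 0 (trunc J y) = (fun k => Csum (fun j => Cmul (y j) (ev (j + N) k)) J).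
Proof.
  apply functional_extensionality; intros k.
  assert (E : forall J0, Csum (fun j => Cmul (y j) (ev (j + N) k)) J0 =
     if andb (Nat.leb N k) (Nat.leb (k - N)%nat J0) then y (k - N)%nat else C0).
  { induction J0; cbn [Csum]; [|rewrite IHJ0]; unfold ev;
    repeat match goal with |- context [Nat.eqb ?a ?b] => destruct (Nat.eqb_spec a b) end;
    repeat match goal with |- context [Nat.leb ?a ?b] => destruct (Nat.leb_spec a b) end;
    simpl; try lia; ceq;
    try (replace (k - N)%nat with 0%nat by lia; ring);
    try (replace (k - N)%nat with (S J0) by lia; ring). }
  rewrite E. unfold Tnm, trunc. destruct (Nat.leb_spec N k); simpl; [|reflexivity].
  replace (k - N + 0)%nat with (k - N)%nat by lia. reflexivity.
Qed.

Lemma norm_trunc J x c : norm_sq_le x c -> norm_sq_le (trunc J x) c.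
Proof.
  intros H N. eapply Rle_trans; [|apply (H N)]. apply sum_Rle. intros n _.
  unfold trunc. destruct (Nat.leb n J); [lra|]. rewrite Cnorm2_C0; apply Cnorm2_nonneg.
Qed.

Lemma norm_shift N y c : norm_sq_le y c -> norm_sq_le (Tnm N 0 y) c.
Proof.
  revert y. induction N; intros y H.
  - eapply norm_sq_le_ext; [|exact H]. intros i; unfold Tnm; simpl. f_equal; f_equal; lia.
  - assert (E : Tnm (S N) 0 y = fun k => match k with O => C0 | S k' => Tnm N 0 y k' end).
    { apply functional_extensionality; intros [|k]; reflexivity. }
    rewrite E. specialize (IHN y H). pose proof (norm_sq_le_nonneg _ _ H).
    intros [|K]. { simpl. rewrite Cnorm2_C0; lra. }
    rewrite decomp_sum by lia. cbv beta iota. simpl pred. rewrite Cnorm2_C0.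
    specialize (IHN K). lra.
Qed.

Lemma Cnorm2_subC a b : Cnorm2 (Csub a b) = Cnorm2 (Csub b a).
Proof. unfold Cnorm2; simpl; ring. Qed.

Lemma Cnorm2_split a b : Cnorm2 b <= 2 * Cnorm2 (Csub a b) + 2 * Cnorm2 a.
Proof.
  replace b with (Cadd (Csub b a) a) at 1 by ceq. rewrite (Cnorm2_subC a b). apply Cnorm2_add.
Qed.

Lemma sum_shift_le f N I : (forall n, 0 <= f n) -> sum_f_R0 (fun i => f (i + N)%nat) I <= sum_f_R0 f (I + N).
Proof.
  intros Hf. induction I; simpl.
  - apply sum_term_le; auto.
  - specialize (Hf (S (I + N))). lra.
Qed.

Lemma conv0_Csum (u : nat -> nat -> Cx) J : (forall j, conv0 (fun N => u N j)) -> conv0 (fun N => Csum (u N) J).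
Proof.
  intros H. induction J; simpl; auto. apply (conv0_add (fun N => Csum (u N) J) (fun N => u N (S J))); auto.
Qed.

Lemma sum_conv0 (u : nat -> nat -> Cx) I : (forall i, conv0 (fun N => u N i)) ->
  forall eps, eps > 0 -> exists N0, forall N, (N0 <= N)%nat -> sum_f_R0 (fun i => Cnorm2 (u N i)) I < eps.
Proof.
  intros H. induction I; intros eps He; simpl.
  - destruct (H 0%nat eps He) as [N0 HN]; exists N0; auto.
  - destruct (IHI (eps/2) ltac:(lra)) as [N1 H1]. destruct (H (S I) (eps/2) ltac:(lra)) as [N2 H2].
    exists (N1 + N2)%nat; intros N HN. specialize (H1 N ltac:(lia)); specialize (H2 N ltac:(lia)). lra.
Qed.

Definition DZ (A : Op) : Prop := forall p q, conv0 (fun n => A (ev (n + q)%nat) (n + p)%nat).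

Lemma Tp_bound A : in_Toeplitz A -> DZ A -> forall l eps,
  (forall x c, norm_sq_le x c -> norm_sq_le (vsub (A x) (LC l x)) (eps ^ 2 * c)) ->
  forall x c, norm_sq_le x c -> norm_sq_le (LC (Lt l) x) (2 * eps ^ 2 * c).
Proof.
  intros HA HD l eps Hl x c Hx I.
  set (J := (I + Mx l)%nat). set (y := trunc J x).
  assert (Hy : norm_sq_le y c) by (apply norm_trunc; auto).
  rewrite (sum_eq _ (fun i => Cnorm2 (LC (Lt l) y i))).
  2:{ intros i Hi. f_equal. apply LC_Lt_local. intros j Hj. unfold y, trunc.
      destruct (Nat.leb_spec j J); [reflexivity|]. unfold J in *; lia. }
  apply le_epsilon. intros d Hd.
  assert (Hc : forall i, conv0 (fun N => A (Tnm N 0 y) (i + N)%nat)).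
  { intros i. unfold y. eapply conv0_ext.
    { intros N. rewrite shift_trunc_sum, A_fin by auto. reflexivity. }
    apply conv0_Csum. intros j. apply conv0_mul.
    eapply conv0_ext; [|apply (HD i j)]. intros N. simpl. rewrite (Nat.add_comm j N), (Nat.add_comm i N). reflexivity. }
  destruct (sum_conv0 (fun N i => A (Tnm N 0 y) (i + N)%nat) I Hc (d/2) ltac:(lra)) as [N0 HN0].
  set (N := (N0 + Mx l)%nat).
  specialize (HN0 N ltac:(unfold N; lia)). simpl in HN0.
  set (z := Tnm N 0 y).
  rewrite (sum_eq _ (fun i => Cnorm2 (LC l z (i + N)%nat))).
  2:{ intros i Hi. unfold z. rewrite LC_shift; auto. unfold N; lia. }
  eapply Rle_trans.
  { apply sum_Rle with (Bn := fun i => 2 * Cnorm2 (vsub (A z) (LC l z) (i + N)%nat) + 2 * Cnorm2 (A z (i + N)%nat)).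
    intros i _. apply Cnorm2_split. }
  rewrite sum_lin.
  assert (S1 : sum_f_R0 (fun i => Cnorm2 (vsub (A z) (LC l z) (i + N)%nat)) I <= eps ^ 2 * c).
  { eapply Rle_trans; [apply (sum_shift_le (fun k => Cnorm2 (vsub (A z) (LC l z) k))); intros; apply Cnorm2_nonneg|].
    apply Hl. apply norm_shift; auto. }
  unfold z in *. lra.
Qed.

Definition SI (g : nat -> nat) : Prop := forall a, (g a < g (S a))%nat.

Lemma SI_ge g : SI g -> forall a, (a <= g a)%nat.
Proof. intros H a; induction a; [lia|]. specialize (H a); lia. Qed.

Lemma SI_mono g : SI g -> forall a b, (a <= b)%nat -> (g a <= g b)%nat.
Proof. intros H a b Hab; induction Hab; [lia|]. specialize (H m); lia. Qed.

Lemma SI_strict g : SI g -> forall a b, (a < b)%nat -> (g a < g b)%nat.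
Proof. intros H a b Hab; induction Hab; [apply H|]. specialize (H m); lia. Qed.

Lemma extract (P : nat -> Prop) : (forall N, exists n, (N <= n)%nat /\ P n) ->
  exists g, SI g /\ forall a, P (g a).
Proof.
  intros H.
  set (f := fun N => proj1_sig (constructive_indefinite_description _ (H N))).
  assert (Hf : forall N, (N <= f N)%nat /\ P (f N)) by (intros; unfold f; destruct constructive_indefinite_description; auto).
  set (g := fix g a := match a with O => f O | S a' => f (S (g a')) end).
  exists g. split.
  - intros a. simpl. destruct (Hf (S (g a))); lia.
  - intros [|a]; simpl; apply Hf.
Qed.

Lemma small_inv eps : eps > 0 -> exists n, / INR (S n) < eps.
Proof.
  intros He. destruct (archimed (/ eps)) as [H _].
  assert (Hz : (0 < up (/ eps))%Z).
  { apply lt_IZR. pose proof (Rinv_0_lt_compat eps He); simpl; lra. }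
  exists (Z.to_nat (up (/ eps))).
  rewrite S_INR, INR_IZR_INZ, Z2Nat.id by lia.
  rewrite <- (Rinv_inv eps) at 2. apply Rinv_lt_contravar.
  - pose proof (Rinv_0_lt_compat eps He); nra.
  - lra.
Qed.

Lemma BW_sub (u : nat -> R) : (forall a, -1 <= u a <= 1) ->
  exists g, SI g /\ exists l, Un_cv (fun a => u (g a)) l.
Proof.
  intros Hb.
  destruct (Bolzano_Weierstrass u _ (compact_P3 (-1) 1) Hb) as [l Hl].
  assert (H : forall N a, exists n, (N <= n)%nat /\ Rabs (u n - l) < / INR (S a)).
  { intros N a. assert (Hp : 0 < / INR (S a)) by (apply Rinv_0_lt_compat, lt_0_INR; lia).
    destruct (Hl (disc l (mkposreal _ Hp)) N) as [n [Hn Hv]].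
    - exists (mkposreal _ Hp). intros y Hy; exact Hy.
    - exists n; split; auto. }
  set (h := fun N a => proj1_sig (constructive_indefinite_description _ (H N a))).
  assert (Hh : forall N a, (N <= h N a)%nat /\ Rabs (u (h N a) - l) < / INR (S a))
    by (intros; unfold h; destruct constructive_indefinite_description; auto).
  set (g := fix g a := match a with O => h O O | S a' => h (S (g a')) (S a') end).
  assert (Hg : forall a, Rabs (u (g a) - l) < / INR (S a)) by (intros [|a]; simpl; apply Hh).
  exists g. split.
  - intros a. simpl. destruct (Hh (S (g a)) (S a)); lia.
  - exists l. intros eps He. destruct (small_inv eps He) as [n Hn].
    exists n. intros a Ha. unfold R_dist. eapply Rlt_trans; [apply Hg|].
    eapply Rle_lt_trans; [|apply Hn]. apply Rinv_le_contravar; [apply lt_0_INR; lia|]. apply le_INR; lia.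
Qed.

Lemma diag_extract (u : nat -> nat -> R) : (forall k a, -1 <= u k a <= 1) ->
  exists phi, SI phi /\ forall k, exists l, Un_cv (fun a => u k (phi a)) l.
Proof.
  intros Hb.
  assert (HG : forall v : nat -> R, exists g, SI g /\ ((forall a, -1 <= v a <= 1) -> exists l, Un_cv (fun a => v (g a)) l)).
  { intros v. destruct (classic (forall a, -1 <= v a <= 1)) as [Hv|Hv].
    - destruct (BW_sub v Hv) as [g [Hg Hl]]. exists g; split; auto.
    - exists (fun a => a). split; [intros a; lia| intros; contradiction]. }
  set (G := fun v => proj1_sig (constructive_indefinite_description _ (HG v))).
  assert (HG' : forall v, SI (G v) /\ ((forall a, -1 <= v a <= 1) -> exists l, Un_cv (fun a => v (G v a)) l))
    by (intros; unfold G; destruct constructive_indefinite_description; auto).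
  set (psi := fix psi k := match k with O => G (u O) | S k' => fun a => psi k' (G (fun b => u (S k') (psi k' b)) a) end).
  assert (Hpsi : forall k, SI (psi k)).
  { induction k; simpl; [apply HG'|]. intros a.
    apply SI_strict; auto. apply (HG' (fun b => u (S k) (psi k b))). }
  assert (Hconv : forall k, exists l, Un_cv (fun b => u k (psi k b)) l).
  { intros [|k]; simpl.
    - apply (HG' (u O)). intros; apply Hb.
    - apply (HG' (fun b => u (S k) (psi k b))). intros; apply Hb. }
  assert (Hrel : forall d k, exists R, (forall b, (b <= R b)%nat) /\ forall b, psi (d + k)%nat b = psi k (R b)).
  { induction d; intros k.
    - exists (fun b => b); split; auto.
    - destruct (IHd k) as [R [HR1 HR2]].
      exists (fun b => R (G (fun b => u (S (d + k)) (psi (d + k)%nat b)) b)). split.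
      + intros b. eapply Nat.le_trans; [|apply HR1]. apply SI_ge, HG'.
      + intros b. simpl. rewrite HR2. reflexivity. }
  exists (fun a => psi a a). split.
  - intros a. simpl.
    set (w := G (fun b => u (S a) (psi a b))).
    assert (S a <= w (S a))%nat by (apply SI_ge, HG').
    apply Nat.lt_le_trans with (psi a (S a)); [apply Hpsi|]. apply SI_mono; auto.
  - intros k. destruct (Hconv k) as [l Hl]. exists l. intros eps He.
    destruct (Hl eps He) as [N HN]. exists (N + k)%nat. intros a Ha.
    destruct (Hrel (a - k)%nat k) as [R [HR1 HR2]].
    simpl. assert (E : psi a a = psi k (R a)).
    { rewrite <- HR2. f_equal. lia. }
    rewrite E. apply HN. specialize (HR1 a). lia.
Qed.

Lemma sq_small d e : e > 0 -> d * d <= e * e / 2 -> Rabs d < e.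
Proof.
  intros He H. destruct (Rcase_abs d) as [h|h].
  - rewrite Rabs_left by lra. nra.
  - rewrite Rabs_right by lra. nra.
Qed.

Lemma sum_fs f L N : (forall n, 0 <= f n) -> (forall n, (L <= n)%nat -> f n = 0) -> sum_f_R0 f N <= sum_f_R0 f L.
Proof.
  intros Hf Hz. destruct (le_lt_dec N L). { apply sum_mono; auto. }
  induction l; simpl. { rewrite (Hz (S L)) by lia; lra. }
  rewrite (Hz (S m)) by lia. lra.
Qed.

Lemma fs_norm (v : vec) L : (forall i, (L <= i)%nat -> v i = C0) -> norm_sq_le v (sum_f_R0 (fun i => Cnorm2 (v i)) L).
Proof.
  intros H N. apply sum_fs; [intros; apply Cnorm2_nonneg|]. intros n Hn; rewrite H; auto; apply Cnorm2_C0.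
Qed.

Lemma fs_conv (v : nat -> vec) (v0 : vec) L :
  (forall a i, (L <= i)%nat -> v a i = C0) -> (forall i, (L <= i)%nat -> v0 i = C0) ->
  (forall i, conv0 (fun a => Csub (v a i) (v0 i))) ->
  forall d, d > 0 -> exists K, forall a, (K <= a)%nat -> norm_sq_le (vsub (v a) v0) d.
Proof.
  intros H1 H2 H3 d Hd.
  destruct (sum_conv0 (fun a i => Csub (v a i) (v0 i)) L (fun i => H3 i) d Hd) as [K HK].
  exists K. intros a Ha N. eapply Rle_trans; [apply (sum_fs _ L)|].
  - intros; apply Cnorm2_nonneg.
  - intros n Hn. unfold vsub. rewrite H1, H2 by auto. unfold Cnorm2; simpl; ring.
  - left. apply HK; auto.
Qed.

Lemma cv_le u l K e : Un_cv u l -> (forall n, (K <= n)%nat -> u n <= e) -> l <= e.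
Proof.
  intros Hu H. destruct (Rle_lt_dec l e) as [h|h]; auto.
  destruct (Hu (l - e) ltac:(lra)) as [N HN]. specialize (HN (N + K)%nat ltac:(lia)).
  specialize (H (N + K)%nat ltac:(lia)). unfold R_dist in HN.
  destruct (Rcase_abs (u (N + K)%nat - l)); [rewrite Rabs_left in HN|rewrite Rabs_right in HN]; lra.
Qed.

Lemma cv_const c : Un_cv (fun _ => c) c.
Proof. intros eps He; exists 0%nat; intros; unfold R_dist; rewrite Rminus_diag, Rabs_R0; lra. Qed.

Lemma cv_Cnorm2 (c : Cx) (v : nat -> Cx) r s : Un_cv (fun b => re (v b)) r -> Un_cv (fun b => im (v b)) s ->
  Un_cv (fun b => Cnorm2 (Csub c (v b))) (Cnorm2 (Csub c (mkC r s))).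
Proof.
  intros H1 H2. unfold Cnorm2, Csub; simpl.
  assert (A1 : Un_cv (fun b => re c - re (v b)) (re c - r)) by (apply CV_minus; auto; apply cv_const).
  assert (A2 : Un_cv (fun b => im c - im (v b)) (im c - s)) by (apply CV_minus; auto; apply cv_const).
  apply CV_plus; apply CV_mult; auto.
Qed.

Lemma cv_sum (f : nat -> nat -> R) (g : nat -> R) N : (forall i, Un_cv (fun b => f b i) (g i)) ->
  Un_cv (fun b => sum_f_R0 (f b) N) (sum_f_R0 g N).
Proof. intros H; induction N; simpl; auto. apply CV_plus; auto. Qed.

Lemma cv_conv0 (v : nat -> Cx) r s : Un_cv (fun b => re (v b)) r -> Un_cv (fun b => im (v b)) s ->
  conv0 (fun b => Csub (v b) (mkC r s)).
Proof.
  intros H1 H2 eps He.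
  set (e := Rmin 1 (eps / 4)).
  assert (He0 : 0 < e) by (unfold e; apply Rmin_pos; lra).
  assert (He1 : e <= 1) by apply Rmin_l. assert (He2 : e <= eps / 4) by apply Rmin_r.
  destruct (H1 e He0) as [N1 HN1]. destruct (H2 e He0) as [N2 HN2].
  exists (N1 + N2)%nat. intros n Hn. specialize (HN1 n ltac:(lia)). specialize (HN2 n ltac:(lia)).
  unfold R_dist in *. unfold Cnorm2, Csub; simpl.
  apply Rabs_def2 in HN1. apply Rabs_def2 in HN2.
  assert ((re (v n) - r) * (re (v n) - r) < e * e) by nra.
  assert ((im (v n) - s) * (im (v n) - s) < e * e) by nra.
  assert (e * e <= e) by nra. lra.
Qed.

Lemma compact_of_approx (A : Op) :
  (forall eps, eps > 0 -> exists (Q : Op) (L : nat),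
    (forall x c, norm_sq_le x c -> norm_sq_le (vsub (A x) (Q x)) (eps * c)) /\
    (forall x i, (L <= i)%nat -> Q x i = C0) /\
    (forall (xs : nat -> vec) x, (forall j, conv0 (fun a => Csub (xs a j) (x j))) ->
       forall i, conv0 (fun a => Csub (Q (xs a) i) (Q x i)))) ->
  compact_op A.
Proof.
  intros H xs Hxs.
  set (u := fun k a => if Nat.even k then re (xs a (Nat.div2 k)) else im (xs a (Nat.div2 k))).
  assert (Hu : forall k a, -1 <= u k a <= 1).
  { intros k a. pose proof (coord_le _ _ (Nat.div2 k) (Hxs a)).
    pose proof (Cnorm2_re (xs a (Nat.div2 k))). pose proof (Cnorm2_im (xs a (Nat.div2 k))).
    unfold u. destruct (Nat.even k); split; nra. }
  destruct (diag_extract u Hu) as [phi [Hphi Hlim]].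
  assert (Hx : forall j, exists xj, conv0 (fun a => Csub (xs (phi a) j) xj)).
  { intros j. destruct (Hlim (2 * j)%nat) as [r Hr]. destruct (Hlim (S (2 * j))) as [s Hs].
    exists (mkC r s). apply cv_conv0.
    - eapply Un_cv_ext; [|exact Hr]. intros a. unfold u. rewrite Nat.even_mul, Nat.div2_double. reflexivity.
    - eapply Un_cv_ext; [|exact Hs]. intros a. unfold u.
      rewrite Nat.even_succ, Nat.odd_mul, Nat.div2_succ_double. reflexivity. }
  set (xst := fun j => proj1_sig (constructive_indefinite_description _ (Hx j))).
  assert (Hxst : forall j, conv0 (fun a => Csub (xs (phi a) j) (xst j)))
    by (intros; unfold xst; destruct constructive_indefinite_description; auto).
  set (w := fun a => A (xs (phi a))).
  assert (Hcauchy : forall eps, eps > 0 -> exists K, forall a b, (K <= a)%nat -> (K <= b)%nat ->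
            norm_sq_le (vsub (w a) (w b)) eps).
  { intros eps He. destruct (H (eps / 24) ltac:(lra)) as [Q [L [HQ1 [HQ2 HQ3]]]].
    destruct (fs_conv (fun a => Q (xs (phi a))) (Q xst) L (fun a i Hi => HQ2 _ i Hi) (fun i Hi => HQ2 _ i Hi)
      (fun i => HQ3 (fun a => xs (phi a)) xst Hxst i) (eps/48) ltac:(lra)) as [K HK].
    exists K. intros a b Ha Hb.
    apply norm_sq_le_mono with (c := 3 * (eps / 24 * 1) + 3 * (2 * (eps / 48) + 2 * (eps / 48)) + 3 * (eps / 24 * 1)); [|lra].
    apply norm_sq_le_comb3 with (u := vsub (w a) (Q (xs (phi a)))) (v := vsub (Q (xs (phi a))) (Q (xs (phi b))))
      (z := vsub (Q (xs (phi b))) (w b)).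
    - apply HQ1, Hxs.
    - apply norm_sq_le_comb with (u := vsub (Q (xs (phi a))) (Q xst)) (v := vsub (Q xst) (Q (xs (phi b)))).
      + apply HK; auto.
      + eapply norm_sq_le_ext; [|apply (HK b Hb)]. intros; unfold vsub; apply Cnorm2_subC.
      + intros i. unfold vsub. apply Cnorm2_sub_tri.
    - eapply norm_sq_le_ext; [|apply (HQ1 _ _ (Hxs (phi b)))]. intros; unfold vsub; apply Cnorm2_subC.
    - intros i. unfold vsub.
      replace (Csub (w a i) (w b i)) with (Cadd (Csub (w a i) (Q (xs (phi a)) i))
        (Cadd (Csub (Q (xs (phi a)) i) (Q (xs (phi b)) i)) (Csub (Q (xs (phi b)) i) (w b i)))) by ceq.
      apply Cnorm2_add3. }
  assert (Hcre : forall i, Cauchy_crit (fun a => re (w a i))).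
  { intros i eps He. destruct (Hcauchy (eps * eps / 2)) as [K HK]; [nra|].
    exists K. intros a b Ha Hb. unfold R_dist. apply sq_small; auto.
    pose proof (coord_le _ _ i (HK a b Ha Hb)). pose proof (Cnorm2_re (vsub (w a) (w b) i)).
    unfold vsub, Csub in *; simpl in *. lra. }
  assert (Hcim : forall i, Cauchy_crit (fun a => im (w a i))).
  { intros i eps He. destruct (Hcauchy (eps * eps / 2)) as [K HK]; [nra|].
    exists K. intros a b Ha Hb. unfold R_dist. apply sq_small; auto.
    pose proof (coord_le _ _ i (HK a b Ha Hb)). pose proof (Cnorm2_im (vsub (w a) (w b) i)).
    unfold vsub, Csub in *; simpl in *. lra. }
  set (y := fun i => mkC (proj1_sig (Rcomplete.R_complete _ (Hcre i))) (proj1_sig (Rcomplete.R_complete _ (Hcim i)))).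
  assert (Hyre : forall i, Un_cv (fun a => re (w a i)) (re (y i))) by (intros; unfold y; simpl; destruct Rcomplete.R_complete; auto).
  assert (Hyim : forall i, Un_cv (fun a => im (w a i)) (im (y i))) by (intros; unfold y; simpl; destruct Rcomplete.R_complete; auto).
  assert (Hconv : forall eps, eps > 0 -> exists K, forall a, (K <= a)%nat -> norm_sq_le (vsub (w a) y) eps).
  { intros eps He. destruct (Hcauchy eps He) as [K HK]. exists K. intros a Ha N.
    apply cv_le with (u := fun b => sum_f_R0 (fun i => Cnorm2 (vsub (w a) (w b) i)) N) (K := K).
    - unfold vsub. apply cv_sum. intros i.
      replace (Cnorm2 (Csub (w a i) (y i))) with (Cnorm2 (Csub (w a i) (mkC (re (y i)) (im (y i))))) by (destruct (y i); reflexivity).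
      apply cv_Cnorm2; auto.
    - intros b Hb. apply HK; auto. }
  exists phi. split; [exact Hphi|]. exists y. split; [|exact Hconv].
  destruct (Hconv 1 ltac:(lra)) as [K HK].
  destruct (H 1 ltac:(lra)) as [Q [L [HQ1 [HQ2 _]]]].
  eexists. apply norm_sq_le_comb with (u := vsub (w K) y) (v := w K).
  - apply HK; auto.
  - apply norm_sq_le_comb with (u := vsub (w K) (Q (xs (phi K)))) (v := Q (xs (phi K))).
    + apply HQ1, Hxs.
    + apply (fs_norm _ L). intros; apply HQ2; auto.
    + intros i. unfold vsub. rewrite Cnorm2_subC. apply Cnorm2_split.
  - intros i. unfold vsub. apply Cnorm2_split.
Qed.

Lemma small_e eps : eps > 0 -> forall k, k > 0 -> exists e, e > 0 /\ k * e ^ 2 <= eps.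
Proof.
  intros He k Hk. set (e := Rmin 1 (eps / k)). exists e.
  assert (0 < e) by (unfold e; apply Rmin_pos; [lra|apply Rdiv_lt_0_compat; lra]).
  assert (e <= 1) by apply Rmin_l. assert (e <= eps / k) by apply Rmin_r.
  split; auto. simpl. assert (e * (e * 1) <= e) by nra.
  apply Rmult_le_compat_l with (r := k) in H1; [|lra].
  replace (k * (eps / k)) with eps in H1 by (field; lra). nra.
Qed.

Lemma DZ_compact A : in_Toeplitz A -> DZ A -> compact_op A.
Proof.
  intros HA HD. apply compact_of_approx. intros eps He.
  destruct (small_e eps He 6 ltac:(lra)) as [e [He1 He2]].
  destruct (toep_LC A HA e He1) as [l Hl].
  pose proof (Tp_bound A HA HD l e Hl) as HT.
  exists (fun x i => Csub (LC l x i) (LC (Lt l) x i)), (Mx l). split; [|split].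
  - intros x c Hx. pose proof (norm_sq_le_nonneg _ _ Hx).
    apply norm_sq_le_mono with (c := 2 * (e ^ 2 * c) + 2 * (2 * e ^ 2 * c)); [|nra].
    apply norm_sq_le_comb with (u := vsub (A x) (LC l x)) (v := LC (Lt l) x); auto.
    intros i. unfold vsub.
    replace (Csub (A x i) (Csub (LC l x i) (LC (Lt l) x i))) with (Cadd (Csub (A x i) (LC l x i)) (LC (Lt l) x i)) by ceq.
    apply Cnorm2_add.
  - intros x i Hi. simpl. rewrite LC_diff_zero by auto. ceq.
  - intros xs x Hc i.
    eapply conv0_ext with (v := fun a => Cadd (Csub (LC l (xs a) i) (LC l x i)) (Cmul (mkC (-1) 0) (Csub (LC (Lt l) (xs a) i) (LC (Lt l) x i)))).
    { intros a. f_equal. ceq. }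
    apply conv0_add; [apply LC_cont; auto|]. apply conv0_mul, LC_cont; auto.
Qed.

Lemma col_conv0 A : in_Toeplitz A -> forall i, conv0 (fun j => A (ev j) i).
Proof.
  intros HA i eps He.
  destruct (small_e eps He 2 ltac:(lra)) as [e [He1 He2]].
  destruct (toep_LC A HA e He1) as [l Hl].
  exists (S (i + Mx l)). intros n Hn.
  pose proof (coord_le _ _ i (Hl _ _ (ev_norm n))). unfold vsub in H.
  rewrite LC_ev_zero in H by lia.
  replace (Cnorm2 (Csub (A (ev n) i) C0)) with (Cnorm2 (A (ev n) i)) in H by (unfold Cnorm2; simpl; ring).
  assert (0 < e ^ 2) by (simpl; nra). lra.
Qed.

Lemma compact_DZ A : in_Toeplitz A -> compact_op A -> DZ A.
Proof.
  intros HA HC p q. apply NNPP. intros Hn.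
  assert (Hex : exists eps, eps > 0 /\ forall N, exists n, (N <= n)%nat /\ eps <= Cnorm2 (A (ev (n + q)%nat) (n + p)%nat)).
  { apply NNPP; intros H1. apply Hn. intros eps He. apply NNPP; intros H2. apply H1. exists eps; split; auto.
    intros N. apply NNPP; intros H3. apply H2. exists N. intros n Hnn.
    apply Rnot_le_lt. intros H4. apply H3. exists n; auto. }
  destruct Hex as [eps [He Hinf]].
  destruct (extract _ Hinf) as [g [Hg Hgp]].
  destruct (HC (fun a => ev (g a + q)%nat) (fun a => ev_norm _)) as [phi [Hphi [y [Hy Hconv]]]].
  assert (Hy0 : forall i, y i = C0).
  { intros i. apply Cnorm2_zero. apply Rle_antisym; [|apply Cnorm2_nonneg].
    apply le_epsilon. intros d Hd. rewrite Rplus_0_l.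
    destruct (Hconv (d / 4) ltac:(lra)) as [J HJ].
    destruct (col_conv0 A HA i (d / 4) ltac:(lra)) as [N HN].
    set (a := (J + N)%nat).
    pose proof (coord_le _ _ i (HJ a ltac:(unfold a; lia))). unfold vsub in H.
    assert (N <= g (phi a) + q)%nat.
    { pose proof (SI_ge phi Hphi a). pose proof (SI_ge g Hg (phi a)). unfold a in *; lia. }
    specialize (HN _ H0).
    pose proof (Cnorm2_split (A (ev (g (phi a) + q)%nat) i) (y i)). lra. }
  destruct (Hconv (eps / 2) ltac:(lra)) as [J HJ].
  specialize (HJ J (le_n _)).
  pose proof (coord_le _ _ (g (phi J) + p)%nat HJ). unfold vsub in H. rewrite Hy0 in H.
  replace (Cnorm2 (Csub (A (ev (g (phi J) + q)%nat) (g (phi J) + p)%nat) C0))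
    with (Cnorm2 (A (ev (g (phi J) + q)%nat) (g (phi J) + p)%nat)) in H by (unfold Cnorm2; simpl; ring).
  specialize (Hgp (phi J)). lra.
Qed.

Definition Vt (t : R) (x : vec) : vec := fun l => Cmul (Cexpi (INR l * t)) (x l).

Lemma Cexpi_mul a b z : Cmul (Cexpi a) (Cmul (Cexpi b) z) = Cmul (Cexpi (a + b)) z.
Proof. unfold Cexpi; ceq; rewrite ?cos_plus, ?sin_plus; ring. Qed.

Lemma Cexpi_0 : Cexpi 0 = Cone.
Proof. unfold Cexpi, Cone. rewrite cos_0, sin_0. reflexivity. Qed.

Lemma Cexpi_ext a b z : a = b -> Cmul (Cexpi a) z = Cmul (Cexpi b) z.
Proof. intros ->; reflexivity. Qed.

Lemma Cnorm2_expi a : Cnorm2 (Cexpi a) = 1.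
Proof. unfold Cnorm2, Cexpi; simpl. pose proof (sin2_cos2 a). unfold Rsqr in H. lra. Qed.

Lemma Cmul_one z : Cmul Cone z = z.
Proof. ceq. Qed.
Lemma Cmul_C0 c : Cmul c C0 = C0.
Proof. ceq. Qed.

Lemma algt_inv F : in_algt F -> forall t x i, F t x i = Cmul (Cexpi (- INR i * t)) (F 0 (Vt t x) i).
Proof.
  induction 1; intros t x i.
  - unfold Ttil, op_scal, Tnm, Vt. destruct (Nat.leb_spec n i).
    + rewrite !Cexpi_mul. apply Cexpi_ext. rewrite plus_INR, minus_INR by lia. ring.
    + rewrite !Cmul_C0. reflexivity.
  - simpl. unfold op_add. rewrite IHin_algt1, IHin_algt2. ceq.
  - simpl. unfold op_scal. rewrite IHin_algt. ceq.
  - simpl. unfold op_mul. rewrite IHin_algt1. f_equal. f_equal.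
    apply functional_extensionality; intros l. unfold Vt at 1. rewrite IHin_algt2.
    rewrite Cexpi_mul. replace (INR l * t + - INR l * t) with 0 by ring. rewrite Cexpi_0, Cmul_one. reflexivity.
Qed.

Lemma norm_Vt t x c : norm_sq_le x c -> norm_sq_le (Vt t x) c.
Proof. apply norm_sq_le_ext. intros i; unfold Vt; rewrite Cnorm2_mul, Cnorm2_expi; ring. Qed.

Lemma Ttilde_inv F : in_Ttilde F -> forall x, l2 x -> forall t i, F t x i = Cmul (Cexpi (- INR i * t)) (F 0 (Vt t x) i).
Proof.
  intros HF x [c Hx] t i. apply small_eq with (K := 4 * c). intros eps He.
  destruct (HF eps He) as [G [HG Hc]].
  pose proof (coord_le _ _ i (Hc t x c Hx)) as H1.
  pose proof (coord_le _ _ i (Hc 0 (Vt t x) c (norm_Vt t x c Hx))) as H2.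
  unfold vsub in *.
  replace (Csub (F t x i) (Cmul (Cexpi (- INR i * t)) (F 0 (Vt t x) i))) with
    (Cadd (Csub (F t x i) (G t x i)) (Cmul (Cexpi (- INR i * t)) (Csub (G 0 (Vt t x) i) (F 0 (Vt t x) i)))).
  2:{ rewrite (algt_inv G HG t x i). ceq. }
  eapply Rle_trans; [apply Cnorm2_add|]. rewrite Cnorm2_mul, Cnorm2_expi, (Cnorm2_subC (G 0 _ i)).
  replace (eps ^ 2 * (4 * c)) with (4 * (eps ^ 2 * c)) by ring. lra.
Qed.

Lemma F_entry A F : in_Toeplitz A -> in_Ttilde F -> op_eq (pi_op F) A ->
  forall t i j, F t (ev j) i = Cmul (Cexpi ((INR j - INR i) * t)) (A (ev j) i).
Proof.
  intros HA HF HE t i j.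
  rewrite (Ttilde_inv F HF (ev j) (ev_l2 j)).
  assert (E : Vt t (ev j) = vscal (Cexpi (INR j * t)) (ev j)).
  { apply functional_extensionality; intros l. unfold Vt, vscal, ev.
    destruct (Nat.eqb_spec l j); [subst; reflexivity|]. rewrite !Cmul_C0; reflexivity. }
  rewrite E. change (F 0) with (pi_op F). rewrite HE by (apply l2_scal, ev_l2).
  rewrite (A_scal A HA _ (ev_l2 j)). rewrite Cexpi_mul. apply Cexpi_ext. ring.
Qed.

Lemma fourier_entry A F k Ak : in_Toeplitz A -> in_Ttilde F -> op_eq (pi_op F) A ->
  is_fourier_coeff F k Ak -> forall i j, IZR k = INR j - INR i -> Ak (ev j) i = A (ev j) i.
Proof.
  intros HA HF HE Hk i j Hij.
  destruct (Hk (ev j) (ev_l2 j) i) as [[pr1 E1] [pr2 E2]].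
  assert (Hpt : forall t, Cmul (Cexpi (- IZR k * t)) (F t (ev j) i) = A (ev j) i).
  { intros t. rewrite (F_entry A F HA HF HE), Cexpi_mul.
    replace (- IZR k * t + (INR j - INR i) * t) with 0 by (rewrite Hij; ring).
    rewrite Cexpi_0, Cmul_one. reflexivity. }
  pose proof PI_RGT_0.
  assert (Hle : 0 <= 2 * PI) by lra.
  rewrite (RiemannInt_P18 pr1 (RiemannInt_P14 0 (2 * PI) (re (A (ev j) i))) Hle) in E1.
  2:{ intros t _. rewrite Hpt. reflexivity. }
  rewrite (RiemannInt_P18 pr2 (RiemannInt_P14 0 (2 * PI) (im (A (ev j) i))) Hle) in E2.
  2:{ intros t _. rewrite Hpt. reflexivity. }
  rewrite RiemannInt_P15 in E1, E2.
  apply Cx_eq; nra.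
Qed.

Fixpoint dpc (b : nat -> Cx) (N i : nat) : Cx :=
  match N with
  | O => b O
  | S N' => if Nat.leb (S N') i then Cadd (dpc b N' i) (b (S N')) else dpc b N' i
  end.

Lemma dp_form b N x i : diag_partial b N x i = Cmul (dpc b N i) (x i).
Proof.
  induction N; cbn [diag_partial dpc].
  - unfold op_scal, Tnm. simpl. rewrite Nat.sub_0_r, Nat.add_0_r. reflexivity.
  - unfold op_add, op_scal. rewrite IHN. unfold Tnm.
    destruct (Nat.leb_spec (S N) i).
    + replace (i - S N + S N)%nat with i by lia. ceq.
    + ceq.
Qed.

Definition Cpart (b : nat -> Cx) (n : nat) : Cx :=
  mkC (sum_f_R0 (fun m => re (b m)) n) (sum_f_R0 (fun m => im (b m)) n).

Lemma dpc_min b N i : dpc b N i = Cpart b (Nat.min N i).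
Proof.
  induction N; cbn [dpc].
  - unfold Cpart; simpl. destruct (b O); reflexivity.
  - destruct (Nat.leb_spec (S N) i).
    + rewrite IHN. replace (Nat.min N i) with N by lia. destruct i; [lia|]. simpl.
      replace (Nat.min N i) with N by lia. unfold Cpart; ceq.
    + rewrite IHN. f_equal. destruct i; simpl; lia.
Qed.

Lemma S_diag b S : diag_series_strong b S -> forall j, S (ev j) j = Cpart b j.
Proof.
  intros H j. symmetry. apply small_eq with (K := 1). intros eps He.
  destruct (H (ev j) (ev_l2 j) (eps ^ 2) ltac:(simpl; nra)) as [N0 HN].
  pose proof (coord_le _ _ j (HN (N0 + j)%nat ltac:(lia))). unfold vsub in H0.
  rewrite dp_form, dpc_min in H0. replace (Nat.min (N0 + j) j) with j in H0 by lia.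
  unfold ev in H0. rewrite Nat.eqb_refl in H0. rewrite (Cx_eq (Cmul (Cpart b j) Cone) (Cpart b j)) in H0 by (simpl; ring).
  rewrite Rmult_1_r. exact H0.
Qed.

Lemma beta_diag A F beta : in_Toeplitz A -> in_Ttilde F -> op_eq (pi_op F) A -> series_rep F beta ->
  forall k j,
    ((k <= 0)%Z -> Cpart (beta k) j = A (ev j) (j + Z.to_nat (- k))%nat) /\
    ((0 < k)%Z -> Cpart (beta k) j = A (ev (j + Z.to_nat k)%nat) j).
Proof.
  intros HA HF HE Hrep k j.
  destruct (Hrep k) as [Ak [S [Hf [Hs [H1 H2]]]]]. split; intros Hk.
  - set (s := Z.to_nat (- k)).
    rewrite <- (fourier_entry A F k Ak HA HF HE Hf (j + s)%nat j).
    2:{ rewrite plus_INR. unfold s. rewrite (INR_IZR_INZ (Z.to_nat _)), Z2Nat.id by lia. rewrite opp_IZR. ring. }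
    rewrite (H1 Hk (ev j) (ev_l2 j)). unfold op_mul, Tnm. fold s.
    destruct (Nat.leb_spec s (j + s)); [|lia].
    replace (j + s - s + 0)%nat with j by lia. rewrite (S_diag _ _ Hs). reflexivity.
  - set (s := Z.to_nat k).
    rewrite <- (fourier_entry A F k Ak HA HF HE Hf j (j + s)%nat).
    2:{ rewrite plus_INR. unfold s. rewrite (INR_IZR_INZ (Z.to_nat _)), Z2Nat.id by lia. ring. }
    rewrite (H2 Hk (ev (j + s)%nat) (ev_l2 _)). unfold op_mul. fold s.
    assert (E : Tnm 0 s (ev (j + s)%nat) = ev j).
    { apply functional_extensionality; intros i. unfold Tnm, ev. simpl.
      rewrite Nat.sub_0_r. destruct (Nat.eqb_spec (i + s) (j + s)); destruct (Nat.eqb_spec i j); auto; lia. }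
    rewrite E, (S_diag _ _ Hs). reflexivity.
Qed.

Lemma Csum_to_conv0 b : Csum_to b C0 <-> conv0 (Cpart b).
Proof.
  split.
  - intros [H1 H2]. eapply conv0_ext; [|apply (cv_conv0 (Cpart b) 0 0 H1 H2)].
    intros n. f_equal. unfold Cpart; ceq.
  - intros H. split; intros eps He; destruct (H (eps * eps / 2) ltac:(nra)) as [N HN]; exists N; intros n Hn;
    specialize (HN n Hn); unfold R_dist; rewrite Rminus_0_r; apply sq_small; auto.
    + pose proof (Cnorm2_re (Cpart b n)). unfold Cpart in *; simpl in *. lra.
    + pose proof (Cnorm2_im (Cpart b n)). unfold Cpart in *; simpl in *. lra.
Qed.

Lemma DZ_iff A F beta : in_Toeplitz A -> in_Ttilde F -> op_eq (pi_op F) A -> series_rep F beta ->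
  (DZ A <-> forall k, Csum_to (beta k) C0).
Proof.
  intros HA HF HE Hrep. pose proof (beta_diag A F beta HA HF HE Hrep) as HB. split.
  - intros HD k. apply Csum_to_conv0. destruct (Z_le_gt_dec k 0) as [Hk|Hk].
    + eapply conv0_ext; [|apply (HD (Z.to_nat (-k)) 0%nat)]. intros n. rewrite (proj1 (HB k n) Hk), Nat.add_0_r. reflexivity.
    + eapply conv0_ext; [|apply (HD 0%nat (Z.to_nat k))]. intros n. rewrite (proj2 (HB k n) ltac:(lia)), Nat.add_0_r. reflexivity.
  - intros Hall p q. destruct (le_lt_dec q p) as [Hpq|Hpq].
    + set (k := (- Z.of_nat (p - q))%Z).
      pose proof (proj1 (Csum_to_conv0 _) (Hall k)) as H.
      eapply conv0_ext; [|apply (conv0_shift _ q H)]. intros n.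
      cbv beta. rewrite (proj1 (HB k (n + q)%nat) ltac:(unfold k; lia)). f_equal. f_equal. unfold k.
      rewrite Z.opp_involutive, Nat2Z.id. lia.
    + set (k := Z.of_nat (q - p)).
      pose proof (proj1 (Csum_to_conv0 _) (Hall k)) as H.
      eapply conv0_ext; [|apply (conv0_shift _ p H)]. intros n.
      cbv beta. rewrite (proj2 (HB k (n + p)%nat) ltac:(unfold k; lia)). f_equal. f_equal. unfold k.
      rewrite Nat2Z.id. f_equal. lia.
Qed.

Theorem theorem3 (A : Op) (F : OpF) (beta : Z -> nat -> Cx) :
  in_Toeplitz A ->
  in_Ttilde F -> op_eq (pi_op F) A ->
  series_rep F beta ->
  (compact_op A <-> forall k : Z, Csum_to (beta k) C0).
Proof.
  intros HA HF HE Hrep. rewrite <- (DZ_iff A F beta HA HF HE Hrep). split.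
  - apply compact_DZ; auto.
  - apply DZ_compact; auto.
Qed.
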